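(* Let $\psi:\mathsf F\Rightarrow\mathsf G$ be a morphism between constructible cosheaves with a common critical set $S=\{a_0<a_1<\dots<a_n\}$, and set $a_{-1}=-\infty$, $a_{n+1}=+\infty$. If $\psi_I$ is a bijection for every interval of the form $I=(a_{i-1},a_{i+1})$ ($0\le i\le n$) and $I=(a_i,a_{i+1})$ ($0\le i\le n-1$), then $\psi$ is an isomorphism of cosheaves (a natural isomorphism).
   Context: $\mathbf{Int}$ is the category whose objects are the open intervals of $\mathbb{R}$ (including unbounded ones and the empty set) and whose morphisms are inclusions. A pre-cosheaf is a functor $\mathsf F:\mathbf{Int}\to\mathbf{Set}$; $\mathsf F[I\subseteq J]$ denotes the image of an inclusion; morphisms are natural transformations. A cosheaf is a pre-cosheaf such that for every open interval $U$ and every family $(I_p)$ of open intervals with union $U$, $\mathsf F(U)$ with the maps $\mathsf F[I_p\subseteq U]$ is the colimit of $\coprod_{p,q}\mathsf F(I_p\cap I_q)\rightrightarrows\coprod_p\mathsf F(I_p)$ (arrows induced by the inclusions $I_p\cap I_q\subseteq I_p$, $I_p\cap I_q\subseteq I_q$). A (pre-)cosheaf is constructible if every $\mathsf F(I)$ is finite and there is a finite $S\subset\mathbb R$ such that $\mathsf F[I\subseteq J]$ is a bijection whenever $I\subseteq J$ and $I\cap S=J\cap S$, and $\mathsf F(I)=\emptyset$ whenever $I\subseteq(-\infty,\min S)$ or $I\subseteq(\max S,\infty)$. *)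

(* Defs.v *)
From Stdlib Require Import Reals Lra List Arith.
Open Scope R_scope.

(* Bounds of an open interval: None = -oo (lower) / +oo (upper). *)
Definition above (lb : option R) (x : R) : Prop :=
  match lb with None => True | Some a => a < x end.
Definition below (ub : option R) (x : R) : Prop :=
  match ub with None => True | Some b => x < b end.
Definition in_int (lb ub : option R) (x : R) : Prop := above lb x /\ below ub x.

(* Objects of Int: open intervals of R (including unbounded ones and the
   empty set), viewed as subsets of R. *)
Record Interval := mkInterval {
  iset : R -> Prop;
  iset_is_int : exists lb ub, forall x, iset x <-> in_int lb ub x }.

Definition intv (lb ub : option R) : Interval :=
  mkInterval (in_int lb ub) (ex_intro _ lb (ex_intro _ ub (fun x => iff_refl _))).

Definition subI (I J : Interval) : Prop := forall x, iset I x -> iset J x.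

Definition lmax (l1 l2 : option R) : option R :=
  match l1, l2 with
  | None, l => l | l, None => l | Some a, Some b => Some (Rmax a b) end.
Definition umin (u1 u2 : option R) : option R :=
  match u1, u2 with
  | None, u => u | u, None => u | Some a, Some b => Some (Rmin a b) end.

Lemma inter_is_int (I J : Interval) :
  exists lb ub, forall x, (iset I x /\ iset J x) <-> in_int lb ub x.
Proof.
  destruct I as [i [l1 [u1 Hi]]]; destruct J as [j [l2 [u2 Hj]]]; simpl.
  exists (lmax l1 l2), (umin u1 u2). intro x. rewrite Hi, Hj.
  unfold in_int, above, below.
  destruct l1 as [a1|], l2 as [a2|], u1 as [b1|], u2 as [b2|]; simpl;
  repeat match goal with
  | |- context [Rmax ?a ?b] => unfold Rmax; destruct (Rle_dec a b)
  | |- context [Rmin ?a ?b] => unfold Rmin; destruct (Rle_dec a b)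
  end; split; intuition lra.
Qed.

Definition inter (I J : Interval) : Interval :=
  mkInterval (fun x => iset I x /\ iset J x) (inter_is_int I J).

Lemma inter_subl I J : subI (inter I J) I.
Proof. intros x [H _]; exact H. Qed.
Lemma inter_subr I J : subI (inter I J) J.
Proof. intros x [_ H]; exact H. Qed.

Record precosheaf := {
  cobj :> Interval -> Type;
  cmap : forall I J : Interval, subI I J -> cobj I -> cobj J;
  cmap_id : forall I (h : subI I I) x, cmap I I h x = x;
  cmap_comp : forall I J K (h1 : subI I J) (h2 : subI J K) (h3 : subI I K) x,
      cmap J K h2 (cmap I J h1 x) = cmap I K h3 x }.

Record cmorph (F G : precosheaf) := {
  comp :> forall I, F I -> G I;
  comp_nat : forall I J (h : subI I J) x,
      comp J (cmap F I J h x) = cmap G I J h (comp I x) }.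

Definition bijective {A B : Type} (f : A -> B) : Prop :=
  exists g : B -> A, (forall x, g (f x) = x) /\ (forall y, f (g y) = y).

Definition finite_type (A : Type) : Prop := exists l : list A, forall x, In x l.

(* Cosheaf condition: for every cover (I_p) of U, F(U) with the maps
   F[I_p ⊆ U] is the colimit (coequalizer) of
   ∐ F(I_p ∩ I_q) ⇉ ∐ F(I_p). *)
Definition is_cosheaf (F : precosheaf) : Prop :=
  forall (U : Interval) (P : Type) (Ip : P -> Interval)
         (hcov : forall x, iset U x <-> exists p, iset (Ip p) x)
         (hsub : forall p, subI (Ip p) U)
         (X : Type) (g : forall p, F (Ip p) -> X),
    (forall p q (z : F (inter (Ip p) (Ip q))),
        g p (cmap F _ _ (inter_subl (Ip p) (Ip q)) z)
        = g q (cmap F _ _ (inter_subr (Ip p) (Ip q)) z)) ->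
    exists h : F U -> X,
      (forall p x, h (cmap F _ _ (hsub p) x) = g p x) /\
      (forall h' : F U -> X, (forall p x, h' (cmap F _ _ (hsub p) x) = g p x) ->
         forall y, h' y = h y).

Definition critical_set (F : precosheaf) (S : list R) : Prop :=
  S <> nil /\
  (forall I J (h : subI I J),
      (forall s, In s S -> (iset I s <-> iset J s)) -> bijective (cmap F I J h)) /\
  (forall I, (forall x, iset I x -> forall s, In s S -> x < s) -> F I -> False) /\
  (forall I, (forall x, iset I x -> forall s, In s S -> s < x) -> F I -> False).

Definition constructible (F : precosheaf) : Prop :=
  (forall I, finite_type (F I)) /\ exists S, critical_set F S.

(* a_{i-1} (with a_{-1} = -oo) and a_{i+1} (with a_{n+1} = +oo). *)
Definition prev_pt (a : nat -> R) (i : nat) : option R :=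
  match i with O => None | S j => Some (a j) end.
Definition next_pt (a : nat -> R) (n i : nat) : option R :=
  if Nat.ltb i n then Some (a (S i)) else None.

(* Main.v *)
Require Import Defs.
From Stdlib Require Import Reals List Arith Lra Lia Classical.
From Stdlib Require Import IndefiniteDescription.
Open Scope R_scope.

Lemma sub_trans I J K : subI I J -> subI J K -> subI I K.
Proof. intros h1 h2 x hx. exact (h2 x (h1 x hx)). Qed.

Lemma conv (I : Interval) x y z : iset I x -> iset I y -> x <= z <= y -> iset I z.
Proof.
  destruct I as [i [lb [ub Hi]]]; simpl. intros Hx Hy Hz.
  apply Hi in Hx; apply Hi in Hy; apply Hi.
  unfold Defs.in_int, above, below in Hx, Hy |- *; destruct lb, ub; simpl in Hx, Hy |- *; destruct Hx, Hy; repeat split; try exact I; lra.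
Qed.

Lemma inS (a : nat -> R) n s : In s (map a (seq 0 (S n))) <-> exists k, s = a k /\ (k <= n)%nat.
Proof.
  rewrite in_map_iff. split.
  - intros [k [<- Hk]]. apply in_seq in Hk. exists k; split; [reflexivity| lia].
  - intros [k [-> Hk]]. exists k; split; [reflexivity| apply in_seq; lia].
Qed.

Lemma mono_lt a n (ha : forall i j, (i < j)%nat -> (j <= n)%nat -> a i < a j) i j :
  (i <= n)%nat -> (j <= n)%nat -> a i < a j -> (i < j)%nat.
Proof.
  intros Hi Hj H. destruct (lt_dec i j) as [?|Hn]; [auto|].
  destruct (Nat.eq_dec i j) as [->|Hne]; [lra|].
  assert (Hji : (j < i)%nat) by lia. specialize (ha j i Hji Hi); lra.
Qed.

Lemma mono_le a n (ha : forall i j, (i < j)%nat -> (j <= n)%nat -> a i < a j) i j :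
  (i <= j)%nat -> (j <= n)%nat -> a i <= a j.
Proof.
  intros H1 H2. destruct (Nat.eq_dec i j) as [->|]; [lra|].
  left; apply ha; lia.
Qed.

Lemma transport (F G : precosheaf) (psi : cmorph F G) S
  (hFS : critical_set F S) (hGS : critical_set G S) I J (h : subI I J) :
  (forall s, In s S -> (iset I s <-> iset J s)) ->
  bijective (psi J) -> bijective (psi I).
Proof.
  intros HS [pJ [HJ1 HJ2]].
  destruct hFS as [_ [hF _]]. destruct hGS as [_ [hG _]].
  destruct (hF I J h HS) as [fi [Hf1 Hf2]].
  destruct (hG I J h HS) as [gi [Hg1 Hg2]].
  exists (fun y => fi (pJ (cmap G I J h y))). split.
  - intro x. rewrite <- comp_nat, HJ1, Hf1. reflexivity.
  - intro y. set (w := fi (pJ (cmap G I J h y))).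
    rewrite <- (Hg1 (psi I w)), <- comp_nat. unfold w. rewrite Hf2, HJ2, Hg1. reflexivity.
Qed.

Lemma empty_bij (F G : precosheaf) (psi : cmorph F G) I : (G I -> False) -> bijective (psi I).
Proof.
  intro HG. exists (fun y => False_rect _ (HG y)). split; intros.
  - exfalso; exact (HG (psi I x)).
  - exfalso; exact (HG y).
Qed.

Lemma glue (F G : precosheaf) (psi : cmorph F G) (hFc : is_cosheaf F) (hGc : is_cosheaf G)
  (U : Interval) (P : Type) (Ip : P -> Interval)
  (hcov : forall x, iset U x <-> exists p, iset (Ip p) x)
  (hsub : forall p, subI (Ip p) U) :
  (forall p, bijective (psi (Ip p))) ->
  (forall p q, bijective (psi (inter (Ip p) (Ip q)))) -> bijective (psi U).
Proof.
  intros Hp Hpq.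
  pose (inv p := proj1_sig (constructive_indefinite_description _ (Hp p))).
  assert (Hinv : forall p, (forall x, inv p (psi (Ip p) x) = x) /\ (forall y, psi (Ip p) (inv p y) = y)).
  { intro p. unfold inv. destruct (constructive_indefinite_description _ (Hp p)) as [g Hg]. exact Hg. }
  destruct (hGc U P Ip hcov hsub (F U) (fun p y => cmap F _ _ (hsub p) (inv p y))) as [h [Hh _]].
  { intros p q z. cbv beta.
    destruct (Hpq p q) as [w [Hw1 Hw2]].
    rewrite <- (Hw2 z). rewrite <- !comp_nat. rewrite (proj1 (Hinv p)), (proj1 (Hinv q)).
    rewrite (cmap_comp F _ _ _ _ _ (sub_trans _ _ _ (inter_subl (Ip p) (Ip q)) (hsub p))).
    rewrite (cmap_comp F _ _ _ _ _ (sub_trans _ _ _ (inter_subl (Ip p) (Ip q)) (hsub p))).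
    reflexivity. }
  exists h. split.
  - intro x.
    destruct (hFc U P Ip hcov hsub (F U) (fun p x => cmap F _ _ (hsub p) x)) as [h0 [_ Hu]].
    { intros p q z. cbv beta.
      rewrite (cmap_comp F _ _ _ _ _ (sub_trans _ _ _ (inter_subl (Ip p) (Ip q)) (hsub p))).
      rewrite (cmap_comp F _ _ _ _ _ (sub_trans _ _ _ (inter_subl (Ip p) (Ip q)) (hsub p))).
      reflexivity. }
    assert (E1 : forall y, h (psi U y) = h0 y).
    { apply (Hu (fun y => h (psi U y))). intros p y. cbv beta.
      rewrite comp_nat, Hh, (proj1 (Hinv p)). reflexivity. }
    assert (E2 : forall y, y = h0 y).
    { apply (Hu (fun y => y)). intros; reflexivity. }
    rewrite E1, <- E2. reflexivity.
  - intro y.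
    destruct (hGc U P Ip hcov hsub (G U) (fun p x => cmap G _ _ (hsub p) x)) as [h0 [_ Hu]].
    { intros p q z. cbv beta.
      rewrite (cmap_comp G _ _ _ _ _ (sub_trans _ _ _ (inter_subl (Ip p) (Ip q)) (hsub p))).
      rewrite (cmap_comp G _ _ _ _ _ (sub_trans _ _ _ (inter_subl (Ip p) (Ip q)) (hsub p))).
      reflexivity. }
    assert (E1 : forall y, psi U (h y) = h0 y).
    { apply (Hu (fun y => psi U (h y))). intros p y'. cbv beta.
      rewrite Hh, comp_nat, (proj2 (Hinv p)). reflexivity. }
    assert (E2 : forall y, y = h0 y).
    { apply (Hu (fun y => y)). intros; reflexivity. }
    rewrite E1, <- E2. reflexivity.
Qed.

Lemma position (a : nat -> R) n (ha : forall i j, (i < j)%nat -> (j <= n)%nat -> a i < a j) x :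
  (forall k, (k <= n)%nat -> x <> a k) ->
  x < a 0%nat \/ a n < x \/ exists i, (i < n)%nat /\ a i < x < a (S i).
Proof.
  revert ha. induction n as [|n IH]; intros ha Hne.
  - specialize (Hne 0%nat (le_n 0)). destruct (Rtotal_order x (a 0%nat)) as [H|[H|H]]; auto; contradiction.
  - destruct IH as [H|[H|[i [Hi H]]]].
    + intros i j ? ?; apply ha; lia.
    + intros k Hk; apply Hne; lia.
    + left; exact H.
    + destruct (Rtotal_order x (a (S n))) as [H'|[H'|H']].
      * right; right; exists n; split; [lia|lra].
      * exfalso; apply (Hne (S n)); auto.
      * right; left; exact H'.
    + right; right; exists i; split; [lia|exact H].
Qed.

Lemma one (F G : precosheaf) (psi : cmorph F G) (a : nat -> R) (n : nat)
  (ha : forall i j, (i < j)%nat -> (j <= n)%nat -> a i < a j)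
  (hFS : critical_set F (map a (seq 0 (S n))))
  (hGS : critical_set G (map a (seq 0 (S n))))
  (h1 : forall i, (i <= n)%nat -> bijective (psi (intv (prev_pt a i) (next_pt a n i))))
  (h2 : forall i, (i < n)%nat -> bijective (psi (intv (Some (a i)) (Some (a (S i))))))
  (I0 : Interval) :
  (forall k k', (k<=n)%nat -> (k'<=n)%nat -> iset I0 (a k) -> iset I0 (a k') -> k = k') ->
  bijective (psi I0).
Proof.
  intro Huniq.
  destruct (classic (exists k, (k <= n)%nat /\ iset I0 (a k))) as [[k [Hk HI]]|Hno].
  - assert (h : subI I0 (intv (prev_pt a k) (next_pt a n k))).
    { intros x Hx. simpl. unfold Defs.in_int, above, below, prev_pt, next_pt. split.
      - destruct k as [|j]; [exact Logic.I|].
        destruct (Rlt_dec (a j) x) as [?|Hc]; [assumption|exfalso].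
        assert (Hj : a j < a (S j)) by (apply ha; lia).
        assert (iset I0 (a j)) by (apply (conv I0 x (a (S j))); auto; lra).
        specialize (Huniq j (S j) ltac:(lia) Hk H HI); lia.
      - destruct (Nat.ltb k n) eqn:E; [|exact Logic.I].
        apply Nat.ltb_lt in E.
        destruct (Rlt_dec x (a (S k))) as [?|Hc]; [assumption|exfalso].
        assert (Hj : a k < a (S k)) by (apply ha; lia).
        assert (iset I0 (a (S k))) by (apply (conv I0 (a k) x); auto; lra).
        specialize (Huniq k (S k) Hk ltac:(lia) HI H); lia. }
    apply (transport F G psi _ hFS hGS I0 _ h); [|apply h1; exact Hk].
    intros s Hs. apply inS in Hs. destruct Hs as [m [-> Hm]]. split; [apply h|].
    simpl. unfold Defs.in_int, above, below, prev_pt, next_pt. intros [H1 H2].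
    assert (m = k).
    { destruct (lt_eq_lt_dec m k) as [[Hlt|Heq]|Hgt]; [|exact Heq|].
      - destruct k as [|j]; [lia|]. assert (a m <= a j) by (apply (mono_le a n ha); lia). lra.
      - destruct (Nat.ltb k n) eqn:E.
        + assert (a (S k) <= a m) by (apply (mono_le a n ha); lia). lra.
        + apply Nat.ltb_ge in E. lia. }
    subst; exact HI.
  - destruct (classic (exists x, iset I0 x)) as [[x Hx]|Hempty].
    + assert (Hne : forall k, (k <= n)%nat -> x <> a k).
      { intros k Hk E; subst; apply Hno; eauto. }
      destruct (position a n ha x Hne) as [H|[H|[i [Hi H]]]].
      * apply empty_bij. apply (proj1 (proj2 (proj2 hGS))).
        intros y Hy s Hs. apply inS in Hs. destruct Hs as [m [-> Hm]].
        assert (a 0%nat <= a m) by (apply (mono_le a n ha); lia).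
        destruct (Rlt_dec y (a 0%nat)); [lra|exfalso].
        apply Hno; exists 0%nat; split; [lia|]. apply (conv I0 x y); auto; lra.
      * apply empty_bij. apply (proj2 (proj2 (proj2 hGS))).
        intros y Hy s Hs. apply inS in Hs. destruct Hs as [m [-> Hm]].
        assert (a m <= a n) by (apply (mono_le a n ha); lia).
        destruct (Rlt_dec (a n) y); [lra|exfalso].
        apply Hno; exists n; split; [lia|]. apply (conv I0 y x); auto; lra.
      * assert (h : subI I0 (intv (Some (a i)) (Some (a (S i))))).
        { intros y Hy. simpl. unfold Defs.in_int, above, below. split.
          - destruct (Rlt_dec (a i) y); [assumption|exfalso].
            apply Hno; exists i; split; [lia|]. apply (conv I0 y x); auto; lra.
          - destruct (Rlt_dec y (a (S i))); [assumption|exfalso].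
            apply Hno; exists (S i); split; [lia|]. apply (conv I0 x y); auto; lra. }
        apply (transport F G psi _ hFS hGS I0 _ h); [|apply h2; exact Hi].
        intros s Hs. apply inS in Hs. destruct Hs as [m [-> Hm]]. split; [apply h|].
        simpl. unfold Defs.in_int, above, below. intros [H1 H2]. exfalso.
        assert (i < m)%nat by (apply (mono_lt a n ha); lia || lra).
        assert (m < S i)%nat by (apply (mono_lt a n ha); lia || lra). lia.
    + apply empty_bij. apply (proj1 (proj2 (proj2 hGS))).
      intros y Hy. exfalso; apply Hempty; eauto.
Qed.

Lemma claim (F G : precosheaf) (psi : cmorph F G) (a : nat -> R) (n : nat)
  (ha : forall i j, (i < j)%nat -> (j <= n)%nat -> a i < a j)
  (hFc : is_cosheaf F) (hGc : is_cosheaf G)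
  (hFS : critical_set F (map a (seq 0 (S n))))
  (hGS : critical_set G (map a (seq 0 (S n))))
  (h1 : forall i, (i <= n)%nat -> bijective (psi (intv (prev_pt a i) (next_pt a n i))))
  (h2 : forall i, (i < n)%nat -> bijective (psi (intv (Some (a i)) (Some (a (S i)))))) :
  forall j (I0 : Interval), (forall k, (k <= n)%nat -> iset I0 (a k) -> (k <= j)%nat) ->
  bijective (psi I0).
Proof.
  induction j as [|j IHj]; intros I0 H.
  - apply (one F G psi a n ha hFS hGS h1 h2).
    intros k k' Hk Hk' Hi Hi'. pose proof (H k Hk Hi). pose proof (H k' Hk' Hi'). lia.
  - destruct (le_lt_dec (S j) n) as [Hjn|Hjn];
      [| apply IHj; intros k Hk Hi; specialize (H k Hk Hi); lia].
    destruct (classic (iset I0 (a (S j)))) as [Hin|Hnin];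
      [| apply IHj; intros k Hk Hi; specialize (H k Hk Hi);
         destruct (Nat.eq_dec k (S j)); [subst; contradiction | lia]].
    assert (Hlt : a j < a (S j)) by (apply ha; lia).
    set (A := inter I0 (intv None (Some (a (S j))))).
    set (B := inter I0 (intv (Some (a j)) None)).
    assert (HA : forall K, (forall x, iset K x -> iset A x) -> bijective (psi K)).
    { intros K HK. apply IHj. intros k Hk Hi. destruct (HK _ Hi) as [Hi1 [_ Hi2]].
      simpl in Hi2. specialize (H k Hk Hi1).
      assert (k < S j)%nat by (apply (mono_lt a n ha); lia || lra). lia. }
    assert (HB : forall K, (forall x, iset K x -> iset B x) -> bijective (psi K)).
    { intros K HK. apply (one F G psi a n ha hFS hGS h1 h2).
      intros k k' Hk Hk' Hi Hi'.
      destruct (HK _ Hi) as [Hi1 [Hi2 _]]. destruct (HK _ Hi') as [Hi1' [Hi2' _]].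
      simpl in Hi2, Hi2'.
      pose proof (H k Hk Hi1). pose proof (H k' Hk' Hi1').
      assert (j < k)%nat by (apply (mono_lt a n ha); lia || lra).
      assert (j < k')%nat by (apply (mono_lt a n ha); lia || lra). lia. }
    apply (glue F G psi hFc hGc I0 bool (fun b => if b then A else B)).
    + intro x; split.
      * intro Hx. destruct (Rlt_dec x (a (S j))).
        -- exists true. split; [exact Hx|]. simpl; unfold Defs.in_int, above, below; split; [exact Logic.I|assumption].
        -- exists false. split; [exact Hx|]. simpl; unfold Defs.in_int, above, below; split; [lra|exact Logic.I].
      * intros [[|] Hx]; exact (proj1 Hx).
    + intros [|]; apply inter_subl.
    + intros [|]; [apply HA|apply HB]; auto.
    + intros [|] [|]; simpl.
      * apply HA. intros x Hx; exact (proj1 Hx).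
      * apply HB. intros x Hx; exact (proj2 Hx).
      * apply HB. intros x Hx; exact (proj1 Hx).
      * apply HB. intros x Hx; exact (proj1 Hx).
Qed.

Theorem mainTheorem5 (F G : precosheaf) (psi : cmorph F G) (a : nat -> R) (n : nat)
  (ha : forall i j, (i < j)%nat -> (j <= n)%nat -> a i < a j)
  (hFc : is_cosheaf F) (hGc : is_cosheaf G)
  (hFfin : forall I, finite_type (F I)) (hGfin : forall I, finite_type (G I))
  (hFS : critical_set F (map a (seq 0 (S n))))
  (hGS : critical_set G (map a (seq 0 (S n))))
  (h1 : forall i, (i <= n)%nat -> bijective (psi (intv (prev_pt a i) (next_pt a n i))))
  (h2 : forall i, (i < n)%nat -> bijective (psi (intv (Some (a i)) (Some (a (S i)))))) :
  exists phi : cmorph G F,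
    (forall I x, phi I (psi I x) = x) /\ (forall I y, psi I (phi I y) = y).
Proof.
  assert (Hall : forall I0, bijective (psi I0)).
  { intro I0. apply (claim F G psi a n ha hFc hGc hFS hGS h1 h2 n I0). intros; assumption. }
  pose (inv I0 := proj1_sig (constructive_indefinite_description _ (Hall I0))).
  assert (Hinv : forall I0, (forall x, inv I0 (psi I0 x) = x) /\ (forall y, psi I0 (inv I0 y) = y)).
  { intro I0. unfold inv. destruct (constructive_indefinite_description _ (Hall I0)) as [g Hg]. exact Hg. }
  unshelve eexists (Build_cmorph G F inv _).
  - intros I0 J h y.
    rewrite <- (proj1 (Hinv J) (cmap F I0 J h (inv I0 y))).
    rewrite comp_nat, (proj2 (Hinv I0)). reflexivity.
  - split; intros; simpl; apply Hinv.
Qed.
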